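(* Let $G$ be a finite, simple, connected $(q+1)$-regular graph with $n$ vertices and $m$ edges, let $a\in[0,1]$ and $b\in\mathbb R$, and let $\tilde{\mathbf U}$ be the generalized Grover matrix of $G$ with parameters $a,b$. Then \[ \det(\mathbf I_{2m}-u\tilde{\mathbf U})=(1-b^2u^2)^{m-n}\det\Big(\{1+b((1-q)a+bq)u^2\}\mathbf I_n-u((1-q)a+b(q+1))\mathbf P(G)\Big). \]
   Context: $D(G)$ is the set of $2m$ arcs of $G$ (for each edge $uv$, both $(u,v)$ and $(v,u)$); for $e=(u,v)$, $o(e)=u$, $t(e)=v$, $e^{-1}=(v,u)$, and $d_v=\deg v$. The generalized Grover matrix $\tilde{\mathbf U}=(\tilde U_{ef})_{e,f\in D(G)}$ has $\tilde U_{ef}=(2/d_{t(f)}-1)a+b$ if $t(f)=o(e)$ and $f\ne e^{-1}$; $\tilde U_{ef}=(2/d_{t(f)}-1)a$ if $f=e^{-1}$; $0$ otherwise. $\mathbf P(G)=(P_{uv})_{u,v\in V(G)}$ is the transition matrix of the simple random walk: $P_{uv}=1/\deg u$ if $u,v$ are adjacent and $0$ otherwise. *)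

(* Defs.v *)
From HB Require Import structures.
From mathcomp Require Import all_boot all_order all_algebra.
Set Implicit Arguments. Unset Strict Implicit. Unset Printing Implicit Defensive.
Import Order.TTheory GRing.Theory Num.Theory.
Local Open Scope ring_scope.

Section Graph.
Variables (T : finType) (g : rel T).

Definition simple_graph := symmetric g /\ irreflexive g.
Definition connected_graph := forall x y : T, connect g x y.
Definition deg (v : T) : nat := #|[set w | g v w]|.
Definition regular_graph (k : nat) := forall v : T, deg v = k.

Definition nedges : nat :=
  #|[set [set p.1; p.2] | p in [set p : T * T | g p.1 p.2]]|.

Definition arc := {p : T * T | g p.1 p.2}.
Definition origin (e : arc) : T := (val e).1.
Definition terminus (e : arc) : T := (val e).2.

Variable R : numFieldType.

Definition grover_entry (a b : R) (e f : arc) : R :=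
  if terminus f == origin e then
    let c := (2 / (deg (terminus f))%:R - 1) * a in
    if val f == (terminus e, origin e) then c else c + b
  else 0.

Definition grover_matrix (a b : R) : 'M[R]_#|{: arc}| :=
  \matrix_(i, j) grover_entry a b (enum_val i) (enum_val j).

Definition transition_matrix : 'M[R]_#|T| :=
  \matrix_(i, j) if g (enum_val i) (enum_val j)
                 then ((deg (enum_val i))%:R)^-1 else 0.

End Graph.

(* Main.v *)
Require Import Defs.
From HB Require Import structures.
From mathcomp Require Import all_boot all_order all_algebra.
Import Order.TTheory GRing.Theory Num.Theory.
Local Open Scope ring_scope.
From mathcomp Require Import ring.
Import Defs.
Set Implicit Arguments. Unset Strict Implicit. Unset Printing Implicit Defensive.

Lemma sylvester (R : comRingType) (N n : nat) (X : 'M[R]_(N, n)) (Y : 'M[R]_(n, N)) :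
  \det (1%:M - X *m Y) = \det (1%:M - Y *m X).
Proof.
have E1 : block_mx 1%:M X Y 1%:M =
   block_mx 1%:M 0 Y 1%:M *m block_mx 1%:M X 0 (1%:M - Y *m X).
  by rewrite mulmx_block !mul1mx !mul0mx !mulmx1 !addr0 addrC subrK.
have E2 : block_mx 1%:M X Y 1%:M =
   block_mx (1%:M - X *m Y) X 0 1%:M *m block_mx 1%:M 0 Y 1%:M.
  by rewrite mulmx_block !mul1mx !mul0mx !mulmx1 !mulmx0 !add0r subrK.
have := congr1 determinant E1; rewrite {1}E2 !det_mulmx ?det_ublock ?det_lblock.
rewrite ?det_ublock ?det_lblock !det1 !mul1r !mulr1 => ->.
by [].
Qed.

Lemma sum_single (R : pzSemiRingType) (X : finType) (x : X) (F : 'I_#|X| -> R) :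
  \sum_(k < #|X|) ((enum_val k == x)%:R * F k) = F (enum_rank x).
Proof.
rewrite (bigD1 (enum_rank x)) //= enum_rankK eqxx mul1r big1 ?addr0 // => k.
move=> hk; case: eqP => [ek|]; last by rewrite mul0r.
by move: hk; rewrite -ek enum_valK eqxx.
Qed.

Section Graph.
Variables (C : numClosedFieldType) (T : finType) (g : rel T).
Hypotheses (gsym : symmetric g) (girr : irreflexive g).

Local Notation A := (arc g).
Local Notation N := #|{: A}|.
Local Notation n := #|T|.

Definition inva (e : A) : A :=
  exist (fun p : T * T => g p.1 p.2) ((val e).2, (val e).1)
    (ltac:(by rewrite /= gsym; exact: (valP e))).

Lemma invaK : involutive inva.
Proof. by move=> e; apply: val_inj; case: e => [[x y] h]. Qed.

Lemma inva_neq e : inva e != e.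
Proof.
case: e => [[x y] h]; apply/eqP => /(congr1 val) /= [exy].
by move: h; rewrite exy /= girr.
Qed.

Lemma origin_inva e : origin (inva e) = terminus e. Proof. by []. Qed.
Lemma terminus_inva e : terminus (inva e) = origin e. Proof. by []. Qed.

Definition ri (i : 'I_N) : 'I_N := enum_rank (inva (enum_val i)).

Lemma riK : involutive ri.
Proof. by move=> i; rewrite /ri enum_rankK invaK enum_valK. Qed.

Lemma ri_neq i : ri i != i.
Proof.
apply/eqP => h; have := inva_neq (enum_val i).
by rewrite -{2}h /ri enum_rankK eqxx.
Qed.

Lemma ev_eq (X : finType) (k : 'I_#|X|) (x : X) :
  (enum_val k == x) = (k == enum_rank x).
Proof. by apply/eqP/eqP => [<-|->]; rewrite ?enum_valK ?enum_rankK. Qed.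

Definition Kv : 'M[C]_(N, n) :=
  \matrix_(i, j) (origin (enum_val i) == enum_val j)%:R.
Definition Lv : 'M[C]_(N, n) :=
  \matrix_(i, j) (terminus (enum_val i) == enum_val j)%:R.
Definition Jm : 'M[C]_N :=
  \matrix_(i, j) (enum_val j == inva (enum_val i))%:R.
Definition Adj : 'M[C]_n :=
  \matrix_(i, j) (g (enum_val i) (enum_val j))%:R.

Lemma KLt : Kv *m Lv^T =
  \matrix_(i, j) (terminus (enum_val j) == origin (enum_val i))%:R.
Proof.
apply/matrixP => i j; rewrite !mxE.
under eq_bigr do rewrite !mxE eq_sym.
by rewrite sum_single enum_rankK.
Qed.

Lemma JJ : Jm *m Jm = 1%:M.
Proof.
apply/matrixP => i j; rewrite !mxE.
under eq_bigr do rewrite !mxE.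
rewrite sum_single enum_rankK invaK.
by rewrite (inj_eq enum_val_inj) eq_sym.
Qed.

Lemma LtJ : Lv^T *m Jm = Kv^T.
Proof.
apply/matrixP => i l; rewrite !mxE.
under eq_bigr => k _ do rewrite !mxE mulrC eq_sym (can2_eq invaK invaK).
by rewrite sum_single enum_rankK.
Qed.


Lemma LtK : Lv^T *m Kv = Adj.
Proof.
apply/matrixP => i j; rewrite !mxE.
case: (boolP (g (enum_val j) (enum_val i))) => h.
  pose e0 : A := exist (fun p : T * T => g p.1 p.2) (enum_val j, enum_val i) h.
  rewrite (eq_bigr (fun k => (enum_val k == e0)%:R * 1)).
    by rewrite sum_single gsym h.
  move=> k _; rewrite !mxE mulr1 -natrM mulnb; congr (_%:R).
  by case: (enum_val k) => [[x y] hxy]; rewrite -val_eqE /= xpair_eqE andbC.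
rewrite big1; last first.
  move=> k _; rewrite !mxE -natrM mulnb.
  case: (enum_val k) => [[x y] hxy] /=.
  case: eqP => [ey|] //=; case: eqP => [ex|] //=.
  by move: h; rewrite -ey -ex hxy.
by rewrite gsym (negbTE h).
Qed.

Lemma card_out (v : T) : #|[set k : 'I_N | origin (enum_val k) == v]| = deg g v.
Proof.
rewrite /deg.
have -> : [set w | g v w] = (fun k => terminus (enum_val k)) @: [set k : 'I_N | origin (enum_val k) == v].
  apply/setP => w; rewrite inE.
  apply/idP/imsetP => [hw|[k]]; last first.
    rewrite inE => /eqP <- ->; exact: (valP (enum_val k)).
  pose e0 : A := exist (fun p : T * T => g p.1 p.2) (v, w) hw.
  exists (enum_rank e0); last by rewrite enum_rankK.
  by rewrite inE enum_rankK.
rewrite card_in_imset //.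

move=> k l; rewrite !inE => /eqP hk /eqP hl ht.
apply: enum_val_inj; apply: val_inj.
move: hk hl ht; rewrite /origin /terminus.
case: (val (enum_val k)) => x y; case: (val (enum_val l)) => x' y' /=.
by move=> -> -> ->.
Qed.

Lemma KtK : Kv^T *m Kv = \matrix_(i, j) ((i == j)%:R * (deg g (enum_val i))%:R).
Proof.
apply/matrixP => i j; rewrite !mxE.
case: (eqVneq i j) => [<-|hij].
  rewrite mul1r -card_out -sum1_card natr_sum [RHS]big_mkcond /=.
  apply: eq_bigr => k _; rewrite !mxE -natrM mulnb andbb inE.
  by case: eqP.
rewrite /= mulr0n mul0r big1 // => k _; rewrite !mxE -natrM mulnb.
case: eqP => [e1|] //=; case: eqP => [e2|] //=.
by move: hij; rewrite -(inj_eq enum_val_inj) -e1 -e2 eqxx.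
Qed.


Lemma grover_dec (d : nat) (hd : forall v, deg g v = d) (a b : C) :
  grover_matrix g a b = ((2 / d%:R - 1) * a + b) *: (Kv *m Lv^T) - b *: Jm.
Proof.
apply/matrixP => i j; rewrite KLt !mxE /grover_entry hd.
set e := enum_val i; set f := enum_val j.
have -> : (f == inva e) = (val f == (terminus e, origin e)) by rewrite -val_eqE.
case h1: (terminus f == origin e); case h2: (val f == (terminus e, origin e)) => /=.
- ring.
- ring.
- move: h1 h2; rewrite /terminus /origin /f; case: (enum_val j) => [[x y] hf] /=.
  by rewrite xpair_eqE => h1 /andP [_ /eqP hy]; rewrite hy eqxx in h1.
- ring.
Qed.


Lemma sum_ord_single (R : pzSemiRingType) m (x : 'I_m) (P : 'I_m -> bool)
   (F : 'I_m -> R) :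
  \sum_(k < m) (((k == x) && P k)%:R * F k) = (P x)%:R * F x.
Proof.
rewrite (bigD1 x) //= eqxx big1 ?addr0 // => k /negbTE ->.
by rewrite /= mul0r.
Qed.

Definition Nl : 'M[C]_N := \matrix_(i, j) ((j == ri i) && (j < i)%N)%:R.
Definition Nu : 'M[C]_N := \matrix_(i, j) ((j == ri i) && (i < j)%N)%:R.
Definition Dn : 'M[C]_N := \matrix_(i, j) ((i == j) && (ri i < i)%N)%:R.

Lemma Jm_split : Jm = Nl + Nu.
Proof.
apply/matrixP => i j; rewrite !mxE ev_eq -/(ri i).
case: eqP => [->|] //=; last by rewrite addr0.
have := ri_neq i; case: (ltngtP (ri i) i) => [h|h|h] _ /=.
- by rewrite addr0.
- by rewrite add0r.
- by have := ri_neq i; rewrite (val_inj h) eqxx.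
Qed.

Lemma NlNu : Nl *m Nu = Dn.
Proof.
apply/matrixP => i j; rewrite !mxE.
under eq_bigr do rewrite !mxE.
rewrite sum_ord_single riK.
case: (eqVneq i j) => [<-|hij] /=; last by rewrite mulr0.
by case: (ri i < i)%N; rewrite /= ?mul1r ?mul0r.
Qed.

Lemma NlDn : Nl *m Dn = 0.
Proof.
apply/matrixP => i j; rewrite !mxE.
under eq_bigr do rewrite !mxE.
rewrite sum_ord_single riK.
case: (ltnP (ri i) i) => h /=; last by rewrite mul0r.
by rewrite ltnNge (ltnW h) andbF mulr0.
Qed.

Lemma detA (t : C) : \det (1%:M + t *: Jm) = (1 - t ^+ 2) ^+ #|[set i : 'I_N | (ri i < i)%N]|.
Proof.
pose L : 'M[C]_N := 1%:M + t *: Nl.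
pose U : 'M[C]_N := 1%:M + t *: Nu - t ^+ 2 *: Dn.
have LU : L *m U = 1%:M + t *: Jm.
  rewrite /L /U mulmxDl mul1mx -scalemxAl !mulmxDr mulmxN mulmx1.
  rewrite -!scalemxAr NlNu NlDn scaler0 subr0 Jm_split.
  rewrite !scalerDr scalerA -expr2.
  move: (1%:M) (t *: Nu) (t ^+ 2 *: Dn) (t *: Nl) => a b c d.
  by rewrite -addrA (addrC d c) addKr -addrA (addrC b d).
rewrite -LU det_mulmx.
have -> : \det L = 1.
  rewrite det_trig; last first.
    apply/is_trig_mxP => i j hij; rewrite !mxE.
    case: eqP => [e|_]; first by move: hij; rewrite e ltnn.
    by rewrite ltnNge (ltnW hij) andbF /= mulr0n mulr0 addr0.
  by rewrite big1 // => i _; rewrite !mxE eqxx ltnn andbF mulr0 addr0.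
rewrite mul1r -det_tr det_trig; last first.
  apply/is_trig_mxP => i j hij; rewrite !mxE.
  case: eqP => [e|_]; first by move: hij; rewrite e ltnn.
  by rewrite ltnNge (ltnW hij) andbF /= !mulr0n !mulr0 addr0 subr0.
rewrite -prodr_const [RHS]big_mkcond /=; apply: eq_bigr => i _.
rewrite !mxE eqxx ltnn andbF mulr0 addr0 inE /=.
by case: (ri i < i)%N => /=; rewrite ?mulr1 ?mulr0 ?subr0.
Qed.


Lemma set2_eq (x y x' y' : T) : x != y -> [set x; y] = [set x'; y'] ->
  (x = x' /\ y = y') \/ (x = y' /\ y = x').
Proof.
move=> nxy E.
have hx : x \in [set x'; y'] by rewrite -E set21.
have hy : y \in [set x'; y'] by rewrite -E set22.
have hx' : x' \in [set x; y] by rewrite E set21.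
move: hx hy hx'; rewrite !in_set2.
case/orP => /eqP ex; case/orP => /eqP ey; case/orP => /eqP ex'; subst;
  try by [left | right | rewrite eqxx in nxy].
Qed.

Definition phi (i : 'I_N) : {set T} :=
  [set origin (enum_val i); terminus (enum_val i)].

Lemma count_neg : #|[set i : 'I_N | (ri i < i)%N]| = nedges g.
Proof.
rewrite /nedges.
have -> : [set [set p.1; p.2] | p in [set p : T * T | g p.1 p.2]] =
          phi @: [set i : 'I_N | (ri i < i)%N].
  apply/setP => E; apply/imsetP/imsetP => [[p]|[i]].
    rewrite inE => hp ->.
    pose e0 : A := exist (fun p : T * T => g p.1 p.2) p hp.
    set k := enum_rank e0.
    case: (ltngtP (ri k) k) => h.
    - by exists k; rewrite ?inE // /phi /k enum_rankK.
    - exists (ri k); first by rewrite inE riK.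
      by rewrite /phi /ri /k !enum_rankK setUC.
    - by have := ri_neq k; rewrite (val_inj h) eqxx.
  move=> _ ->; exists (val (enum_val i)); last by [].
  by rewrite inE; exact: (valP (enum_val i)).
rewrite card_in_imset // => i j; rewrite !inE => hi hj.
rewrite /phi => /set2_eq [].
  rewrite /origin /terminus; case: (enum_val i) => [[x y] h] /=.
  by apply/eqP => exy; move: h; rewrite /= exy girr.
  move=> [ho ht]; apply: enum_val_inj; apply: val_inj.
  move: ho ht; rewrite /origin /terminus.
  by case: (val (enum_val i)) => ? ?; case: (val (enum_val j)) => ? ? /= -> ->.
move=> [ho ht].
have ej : j = ri i.
  apply/eqP; rewrite -ev_eq; apply/eqP; apply: val_inj.
  move: ho ht; rewrite /origin /terminus /=.
  by case: (val (enum_val i)) => ? ?; case: (val (enum_val j)) => ? ? /= -> ->.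
by move: hj hi; rewrite ej riK => h1 h2; move: (ltn_trans h1 h2); rewrite ltnn.
Qed.


Lemma main_sec (q : nat) (reg : forall v, deg g v = q.+1) (a b u : C) :
  1 - b ^+ 2 * u ^+ 2 != 0 ->
  \det (1%:M - u *: grover_matrix g a b) =
    (1 - b ^+ 2 * u ^+ 2) ^ ((nedges g)%:Z - (#|T|)%:Z) *
    \det ((1 + b * ((1 - q%:R) * a + b * q%:R) * u ^+ 2)%:M
          - (u * ((1 - q%:R) * a + b * (q.+1)%:R)) *: transition_matrix g C).
Proof.
move=> hx.
set x := 1 - b ^+ 2 * u ^+ 2.
set c := (2 / (q.+1)%:R - 1) * a.
set s := u * (c + b).
set t := u * b.
have hq : (q.+1)%:R != 0 :> C by rewrite pnatr_eq0.
rewrite (grover_dec reg).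
pose Am : 'M[C]_N := 1%:M + t *: Jm.
pose Ap : 'M[C]_N := 1%:M - t *: Jm.
have AmAp : Am *m Ap = x%:M.
  rewrite /Am /Ap mulmxDl mul1mx mulmxBr mulmx1 -scalemxAl -scalemxAr scalerA JJ.
  rewrite addrA subrK scalemx1 -raddfB /=; congr (_%:M).
  by rewrite /x /t; ring.
have -> : 1%:M - u *: ((c + b) *: (Kv *m Lv^T) - b *: Jm) =
    Am *m (1%:M - ((s / x) *: (Ap *m Kv)) *m Lv^T).
  rewrite mulmxBr mulmx1 -scalemxAl -scalemxAr !mulmxA AmAp -mulmxA mul_scalar_mx.
  rewrite scalerA divfK // /Am /t /s.
  rewrite scalerBr !scalerA.
  move: (1%:M) ((u * b) *: Jm) ((u * (c + b)) *: (Kv *m Lv^T)) => p r w.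
  by rewrite opprB addrA addrAC.
have ht : 1 - t ^+ 2 = x by rewrite /t /x; ring.
rewrite det_mulmx /Am detA ht count_neg sylvester.
have EZ : 1%:M - Lv^T *m ((s / x) *: (Ap *m Kv)) =
   x^-1 *: ((1 + b * ((1 - q%:R) * a + b * q%:R) * u ^+ 2)%:M
          - (u * ((1 - q%:R) * a + b * (q.+1)%:R)) *: transition_matrix g C).
  rewrite -scalemxAr mulmxA /Ap mulmxBr mulmx1 -scalemxAr LtJ mulmxBl -scalemxAl LtK KtK.
  apply/matrixP => i j; rewrite !mxE reg.
  move: hx hq; rewrite /s /c /t /x => hx hq.
  have hq' : 1 + q%:R != 0 :> C by move: hq; rewrite -addn1 natrD addrC.
  have hx' : 1 - (b * u) ^+ 2 != 0 by rewrite exprMn.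
  by case: (i == j); case: (g _ _); rewrite /= ?mulr1n ?mulr0n; field; rewrite hq' hx'.
rewrite EZ detZ mulrA exprVn; congr (_ * _).
by rewrite expfzDr // -exprnP -exprnN.
Qed.

End Graph.

Theorem corollary1 (C : numClosedFieldType) (T : finType) (g : rel T) (q : nat)
    (a b u : C) :
  simple_graph g -> connected_graph g -> regular_graph g q.+1 ->
  0 <= a <= 1 -> b \is Num.real ->
  1 - b ^+ 2 * u ^+ 2 != 0 ->
  \det (1%:M - u *: grover_matrix g a b) =
    (1 - b ^+ 2 * u ^+ 2) ^ ((nedges g)%:Z - (#|T|)%:Z) *
    \det ((1 + b * ((1 - q%:R) * a + b * q%:R) * u ^+ 2)%:M
          - (u * ((1 - q%:R) * a + b * (q.+1)%:R)) *: transition_matrix g C).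
Proof.
move=> [gsym girr] _ reg _ _ hx.
exact: (main_sec gsym girr reg a hx).
Qed.
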